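(* In the setting of the interior permanent magnet synchronous machine model (state $x=(i_{s\alpha},i_{s\beta},\omega,\theta)^T$, $\frac{d}{dt}\big(L(\theta)i_{s\alpha\beta}+\psi_r(\cos\theta,\sin\theta)^T\big)=v-R_si_{s\alpha\beta}$, $\dot\omega=0$, $\dot\theta=\omega$, which includes the surface PMSM $L_\Delta=0$ and the synchronous reluctance machine $\psi_r=0$), define the observability vector $\Psi_{\mathcal{O}}=(\Psi_{\mathcal{O}d},\Psi_{\mathcal{O}q})$ in rotor coordinates by $$\Psi_{\mathcal{O}d}=L_\Delta i_{sd}+\psi_r,\qquad \Psi_{\mathcal{O}q}=L_\Delta i_{sq},$$ and, when $\Psi_{\mathcal{O}}\neq0$, let $\theta_{\mathcal{O}}$ be its polar angle, so $\frac{d\theta_{\mathcal{O}}}{dt}=\frac{\Psi_{\mathcal{O}d}\dot\Psi_{\mathcal{O}q}-\Psi_{\mathcal{O}q}\dot\Psi_{\mathcal{O}d}}{\Psi_{\mathcal{O}d}^2+\Psi_{\mathcal{O}q}^2}$ (derivatives along the model). Then the $4\times4$ observability matrix $\mathcal{O}(x)$ (rows: gradients in $x$ of $i_{s\alpha},i_{s\beta},\mathcal{L}_fi_{s\alpha},\mathcal{L}_fi_{s\beta}$) satisfies $$\det\mathcal{O}(x)=\frac{\Psi_{\mathcal{O}d}^2+\Psi_{\mathcal{O}q}^2}{L_dL_q}\Big(\omega-\frac{d\theta_{\mathcal{O}}}{dt}\Big)\quad\text{when }\Psi_{\mathcal{O}}\ne0,\qquad \det\mathcal{O}(x)=0\quad\text{when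 }\Psi_{\mathcal{O}}=0.$$ Consequently, the observability rank condition holds at $x$ (and hence the machine is locally weakly observable there) if and only if $\Psi_{\mathcal{O}}\neq0$ and $\frac{d\theta_{\mathcal{O}}}{dt}\neq\omega$.
   Context: $L(\theta)=\begin{bmatrix}L_0+L_2\cos2\theta & L_2\sin2\theta\\ L_2\sin2\theta & L_0-L_2\cos2\theta\end{bmatrix}$, $L_d=L_0+L_2>0$, $L_q=L_0-L_2>0$, $L_\Delta=L_d-L_q$; $i_{sd},i_{sq}$ are given by $\begin{bmatrix}i_{s\alpha}\\ i_{s\beta}\end{bmatrix}=\begin{bmatrix}\cos\theta&-\sin\theta\\ \sin\theta&\cos\theta\end{bmatrix}\begin{bmatrix}i_{sd}\\ i_{sq}\end{bmatrix}$. The Lie derivative $\mathcal{L}_fh=\frac{\partial h}{\partial x}f(x,u)$. The observability rank condition at $x_0$ (nonsingularity of the observability matrix at $x_0$) implies local weak observability at $x_0$. *)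

(* Defs.v *)
From Stdlib Require Import Reals.
Open Scope R_scope.

(* State x = (i_salpha, i_sbeta, omega, theta), coordinates 0,1,2,3. *)
Definition R4 : Type := (R * R * R * R)%type.

Definition st0 (x : R4) : R := let '(a, _, _, _) := x in a.
Definition st1 (x : R4) : R := let '(_, b, _, _) := x in b.
Definition st2 (x : R4) : R := let '(_, _, c, _) := x in c.
Definition st3 (x : R4) : R := let '(_, _, _, d) := x in d.

Definition coord (x : R4) (j : nat) : R :=
  match j with 0 => st0 x | 1 => st1 x | 2 => st2 x | _ => st3 x end.

Definition upd (x : R4) (j : nat) (t : R) : R4 :=
  let '(a, b, c, d) := x in
  match j with
  | 0 => (t, b, c, d)
  | 1 => (a, t, c, d)
  | 2 => (a, b, t, d)
  | _ => (a, b, c, t)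
  end.

Definition dot4 (g v : R4) : R :=
  st0 g * st0 v + st1 g * st1 v + st2 g * st2 v + st3 g * st3 v.

Definition is_gradient (F : R4 -> R) (x : R4) (g : R4) : Prop :=
  forall j : nat, (j < 4)%nat ->
    derivable_pt_lim (fun t => F (upd x j t)) (coord x j) (coord g j).

Definition det3 (a11 a12 a13 a21 a22 a23 a31 a32 a33 : R) : R :=
  a11 * (a22 * a33 - a23 * a32)
  - a12 * (a21 * a33 - a23 * a31)
  + a13 * (a21 * a32 - a22 * a31).

Definition det4 (r1 r2 r3 r4 : R4) : R :=
  st0 r1 * det3 (st1 r2) (st2 r2) (st3 r2) (st1 r3) (st2 r3) (st3 r3) (st1 r4) (st2 r4) (st3 r4)
  - st1 r1 * det3 (st0 r2) (st2 r2) (st3 r2) (st0 r3) (st2 r3) (st3 r3) (st0 r4) (st2 r4) (st3 r4)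
  + st2 r1 * det3 (st0 r2) (st1 r2) (st3 r2) (st0 r3) (st1 r3) (st3 r3) (st0 r4) (st1 r4) (st3 r4)
  - st3 r1 * det3 (st0 r2) (st1 r2) (st2 r2) (st0 r3) (st1 r3) (st2 r3) (st0 r4) (st1 r4) (st2 r4).

Definition obs_rank_condition (r1 r2 r3 r4 : R4) : Prop := det4 r1 r2 r3 r4 <> 0.

(* Machine data: L(theta) = [[L0 + L2 cos 2th, L2 sin 2th],[L2 sin 2th, L0 - L2 cos 2th]] *)
Definition Ld (L0 L2 : R) : R := L0 + L2.
Definition Lq (L0 L2 : R) : R := L0 - L2.
Definition LDelta (L0 L2 : R) : R := Ld L0 L2 - Lq L0 L2.

(* total flux  L(theta) i_salphabeta + psi_r (cos theta, sin theta) *)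
Definition flux_a (L0 L2 psi_r : R) (y : R4) : R :=
  (L0 + L2 * cos (2 * st3 y)) * st0 y + L2 * sin (2 * st3 y) * st1 y + psi_r * cos (st3 y).
Definition flux_b (L0 L2 psi_r : R) (y : R4) : R :=
  L2 * sin (2 * st3 y) * st0 y + (L0 - L2 * cos (2 * st3 y)) * st1 y + psi_r * sin (st3 y).

(* f is the vector field x |-> f(x,u) of the model for the (current) input u = (va, vb):
   d/dt flux = v - Rs i,  d omega/dt = 0,  d theta/dt = omega,
   where d/dt of a state function is its derivative along f (gradient . f). *)
Definition is_ipmsm_field (L0 L2 psi_r Rs va vb : R) (f : R4 -> R4) : Prop :=
  forall y : R4,
    st2 (f y) = 0 /\ st3 (f y) = st2 y /\
    (forall g, is_gradient (flux_a L0 L2 psi_r) y g -> dot4 g (f y) = va - Rs * st0 y) /\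
    (forall g, is_gradient (flux_b L0 L2 psi_r) y g -> dot4 g (f y) = vb - Rs * st1 y).

Definition i_sd (y : R4) : R := cos (st3 y) * st0 y + sin (st3 y) * st1 y.
Definition i_sq (y : R4) : R := - sin (st3 y) * st0 y + cos (st3 y) * st1 y.

Definition PsiOd (L0 L2 psi_r : R) (y : R4) : R := LDelta L0 L2 * i_sd y + psi_r.
Definition PsiOq (L0 L2 : R) (y : R4) : R := LDelta L0 L2 * i_sq y.

(* Main.v *)
Require Import Defs.
From Stdlib Require Import Reals Lra Lia FunctionalExtensionality.
From Coquelicot Require Import Coquelicot.
Open Scope R_scope.

Definition JaP (L2 psi a b C S c s : R) := -2*L2*S*a + 2*L2*C*b - psi*s.
Definition JbP (L2 psi a b C S c s : R) := 2*L2*C*a + 2*L2*S*b + psi*c.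
Definition JadP (L2 psi a b C S c s : R) := -4*L2*C*a - 4*L2*S*b - psi*c.
Definition JbdP (L2 psi a b C S c s : R) := -4*L2*S*a + 4*L2*C*b - psi*s.
Definition FAP (L0 L2 psi Rs va vb a b w C S c s : R) :=
  (L0 - L2*C)*(va - Rs*a - w*JaP L2 psi a b C S c s)
  - L2*S*(vb - Rs*b - w*JbP L2 psi a b C S c s).
Definition FBP (L0 L2 psi Rs va vb a b w C S c s : R) :=
  -L2*S*(va - Rs*a - w*JaP L2 psi a b C S c s)
  + (L0 + L2*C)*(vb - Rs*b - w*JbP L2 psi a b C S c s).
Definition FAdP (L0 L2 psi Rs va vb a b w C S c s : R) :=
  2*L2*S*(va - Rs*a - w*JaP L2 psi a b C S c s)
  + (L0 - L2*C)*(-w*JadP L2 psi a b C S c s)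
  - 2*L2*C*(vb - Rs*b - w*JbP L2 psi a b C S c s)
  - L2*S*(-w*JbdP L2 psi a b C S c s).
Definition FBdP (L0 L2 psi Rs va vb a b w C S c s : R) :=
  -2*L2*C*(va - Rs*a - w*JaP L2 psi a b C S c s)
  - L2*S*(-w*JadP L2 psi a b C S c s)
  - 2*L2*S*(vb - Rs*b - w*JbP L2 psi a b C S c s)
  + (L0 + L2*C)*(-w*JbdP L2 psi a b C S c s).
Definition FAwP (L0 L2 psi a b C S c s : R) :=
  (L0 - L2*C)*(-JaP L2 psi a b C S c s) - L2*S*(-JbP L2 psi a b C S c s).
Definition FBwP (L0 L2 psi a b C S c s : R) :=
  -L2*S*(-JaP L2 psi a b C S c s) + (L0 + L2*C)*(-JbP L2 psi a b C S c s).

Lemma core (L0 L2 psi Rs va vb a b w C S c s : R) :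
  C = c^2 - s^2 -> S = 2*s*c -> c^2 + s^2 = 1 ->
  let D := L0^2 - L2^2 in
  let Pd := 2*L2*(c*a+s*b) + psi in
  let Pq := 2*L2*(-s*a+c*b) in
  let dPd := 2*L2*c*FAP L0 L2 psi Rs va vb a b w C S c s
           + 2*L2*s*FBP L0 L2 psi Rs va vb a b w C S c s + D*2*L2*(-s*a+c*b)*w in
  let dPq := -2*L2*s*FAP L0 L2 psi Rs va vb a b w C S c s
           + 2*L2*c*FBP L0 L2 psi Rs va vb a b w C S c s + D*2*L2*(-c*a-s*b)*w in
  FAwP L0 L2 psi a b C S c s * FBdP L0 L2 psi Rs va vb a b w C S c s
  - FAdP L0 L2 psi Rs va vb a b w C S c s * FBwP L0 L2 psi a b C S c s
  = D*w*(Pd^2+Pq^2) - (Pd*dPq - Pq*dPd).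
Proof.
  intros HC HS Hcs D Pd Pq dPd dPq. subst D Pd Pq dPd dPq C S.
  unfold FAwP, FBwP, FAdP, FBdP, FAP, FBP, JaP, JbP, JadP, JbdP.
  match goal with |- ?l = ?r =>
    assert (E : l - r = (c^2+s^2-1)*(
(2)*L2^3*psi*b*w*s^5 + (4)*L2^3*va*b*s^4 + (-8)*L2^3*Rs*a*b*s^4 + (8)*L0*L2^3*b^2*w*s^4 + (1)*L2^2*psi^2*w*s^4 + (2)*L2^3*psi*a*w*c*s^4 + (-8)*L0*L2^3*a^2*w*s^4 + (4)*L2^3*vb*a*s^4 + (-8)*L2^4*b^2*w*s^4 + (-8)*L2^4*a^2*w*s^4 + (8)*L0*L2^2*psi*b*w*s^3 + (4)*L2^3*psi*b*w*c^2*s^3 + (-8)*L2^3*vb*b*c*s^3 + (8)*L2^3*Rs*b^2*c*s^3 + (32)*L0*L2^3*a*b*w*c*s^3 + (2)*L2^2*psi*va*s^3 + (-2)*L2^2*psi*Rs*a*s^3 + (8)*L2^3*va*a*c*s^3 + (-8)*L2^3*Rs*a^2*c*s^3 + (-6)*L2^3*psi*b*w*s^3 + (8)*L0*L2^2*psi*a*w*c*s^2 + (4)*L0*L2^2*va*b*s^2 + (8)*L0^2*L2^2*b^2*w*s^2 + (2)*L0*L2*psi^2*w*s^2 + (2)*L2^2*psi^2*w*c^2*s^2 + (-2)*L2^2*psi*vb*c*s^2 + (2)*L2^2*psi*Rs*b*c*s^2 + (4)*L2^3*psi*a*w*c^3*s^2 + (8)*L0^2*L2^2*a^2*w*s^2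 + (-4)*L0*L2^2*vb*a*s^2 + (-6)*L2^3*psi*a*w*c*s^2 + (-16)*L2^4*a^2*w*c^2*s^2 + (-16)*L2^4*b^2*w*c^2*s^2 + (-1)*L2^2*psi^2*w*s^2 + (-8)*L2^4*b^2*w*s^2 + (-8)*L2^4*a^2*w*s^2 + (8)*L0*L2^2*psi*b*w*c^2*s + (6)*L0^2*L2*psi*b*w*s + (2)*L0*L2*psi*va*s + (-2)*L0*L2*psi*Rs*a*s + (2)*L2^3*psi*b*w*c^4*s + (-8)*L2^3*vb*b*c^3*s + (8)*L2^3*Rs*b^2*c^3*s + (32)*L0*L2^3*a*b*w*c^3*s + (8)*L2^3*va*a*c^3*s + (2)*L2^2*psi*va*c^2*s + (-8)*L2^3*Rs*a^2*c^3*s + (-2)*L2^2*psi*Rs*a*c^2*s + (-6)*L2^3*psi*b*w*c^2*s + (-6)*L2^3*psi*b*w*s + (-4)*L0*L2^2*vb*a*c^2 + (8)*L0^2*L2^2*a^2*w*c^2 + (6)*L0^2*L2*psi*a*w*c + (8)*L0*L2^2*psi*a*w*c^3 + (4)*L0*L2^2*va*b*c^2 + (8)*L0^2*L2^2*b^2*w*c^2 + (-2)*L0*L2*psi*vb*c + (2)*L0*L2*psi*Rs*b*c + (1)*L0^2*psi^2*w + (2)*L0*L2*psi^2*w*c^2 + (-4)*L2^3*va*b*c^4 + (8)*L2^3*Rs*a*b*c^4 + (-8)*L0*L2^3*b^2*w*c^4 + (-2)*L2^2*psi*vb*c^3 + (2)*L2^2*psi*Rs*b*c^3 + (1)*L2^2*psi^2*w*c^4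 + (2)*L2^3*psi*a*w*c^5 + (8)*L0*L2^3*a^2*w*c^4 + (-4)*L2^3*vb*a*c^4 + (-6)*L2^3*psi*a*w*c^3 + (-8)*L2^4*a^2*w*c^4 + (-8)*L2^4*b^2*w*c^4 + (-1)*L2^2*psi^2*w*c^2 + (-6)*L2^3*psi*a*w*c + (-8)*L2^4*a^2*w*c^2 + (-8)*L2^4*b^2*w*c^2 + (-1)*L2^2*psi^2*w)) by ring end.
  rewrite Hcs in E. replace (1-1) with 0 in E by ring. rewrite Rmult_0_l in E. lra.
Qed.

Lemma der_eq f x l1 l2 : derivable_pt_lim f x l1 -> is_derive f x l2 -> l1 = l2.
Proof. intros H1 H2. apply (uniqueness_limite f x); [exact H1| apply is_derive_Reals; exact H2]. Qed.

Lemma trig_id t : cos (2*t) ^ 2 + sin (2*t) ^ 2 = 1.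
Proof. pose proof (sin2_cos2 (2*t)) as H. unfold Rsqr in H. lra. Qed.

Lemma grad_fa L0 L2 psi a b w t :
  is_gradient (flux_a L0 L2 psi) (a,b,w,t)
    (L0 + L2*cos(2*t), L2*sin(2*t), 0, JaP L2 psi a b (cos(2*t)) (sin(2*t)) (cos t) (sin t)).
Proof.
  intros j Hj. destruct j as [|[|[|[|j]]]]; [| | | | lia];
  unfold flux_a; simpl; apply is_derive_Reals; unfold JaP; auto_derive; auto; ring.
Qed.

Lemma grad_fb L0 L2 psi a b w t :
  is_gradient (flux_b L0 L2 psi) (a,b,w,t)
    (L2*sin(2*t), L0 - L2*cos(2*t), 0, JbP L2 psi a b (cos(2*t)) (sin(2*t)) (cos t) (sin t)).
Proof.
  intros j Hj. destruct j as [|[|[|[|j]]]]; [| | | | lia];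
  unfold flux_b; simpl; apply is_derive_Reals; unfold JbP; auto_derive; auto; ring.
Qed.

Lemma f_expl L0 L2 psi Rs va vb f (HD : L0^2 - L2^2 <> 0)
  (hf : is_ipmsm_field L0 L2 psi Rs va vb f) a b w t :
  st0 (f (a,b,w,t)) = FAP L0 L2 psi Rs va vb a b w (cos(2*t)) (sin(2*t)) (cos t) (sin t) / (L0^2-L2^2)
  /\ st1 (f (a,b,w,t)) = FBP L0 L2 psi Rs va vb a b w (cos(2*t)) (sin(2*t)) (cos t) (sin t) / (L0^2-L2^2).
Proof.
  destruct (hf (a,b,w,t)) as [H2 [H3 [Ha Hb]]].
  specialize (Ha _ (grad_fa L0 L2 psi a b w t)).
  specialize (Hb _ (grad_fb L0 L2 psi a b w t)).
  unfold dot4 in Ha, Hb. simpl in H3, Ha, Hb. rewrite H2, H3 in Ha, Hb.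
  pose proof (trig_id t) as HT.
  set (f0 := st0 (f (a,b,w,t))) in *. set (f1 := st1 (f (a,b,w,t))) in *.
  set (C := cos (2*t)) in *. set (S := sin (2*t)) in *.
  set (Ja := JaP L2 psi a b C S (cos t) (sin t)) in *.
  set (Jb := JbP L2 psi a b C S (cos t) (sin t)) in *.
  unfold FAP, FBP. fold Ja Jb.
  assert (Hea : va - Rs*a - w*Ja = (L0 + L2*C)*f0 + L2*S*f1) by lra.
  assert (Heb : vb - Rs*b - w*Jb = L2*S*f0 + (L0 - L2*C)*f1) by lra.
  rewrite Hea, Heb. split.
  - apply (Rmult_eq_reg_r (L0^2-L2^2)); [|exact HD].
    unfold Rdiv. rewrite Rmult_assoc, Rinv_l, Rmult_1_r by exact HD.
    match goal with |- ?l = ?r => assert (X : r - l = -L2^2*f0*(C^2+S^2-1)) by ring end.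
    rewrite HT in X. lra.
  - apply (Rmult_eq_reg_r (L0^2-L2^2)); [|exact HD].
    unfold Rdiv. rewrite Rmult_assoc, Rinv_l, Rmult_1_r by exact HD.
    match goal with |- ?l = ?r => assert (X : r - l = -L2^2*f1*(C^2+S^2-1)) by ring end.
    rewrite HT in X. lra.
Qed.

Theorem proposition1 (L0 L2 psi_r Rs va vb : R) (f : R4 -> R4)
  (hLd : 0 < Ld L0 L2) (hLq : 0 < Lq L0 L2)
  (hf : is_ipmsm_field L0 L2 psi_r Rs va vb f)
  (x r1 r2 r3 r4 gd gq : R4)
  (h1 : is_gradient st0 x r1)
  (h2 : is_gradient st1 x r2)
  (h3 : is_gradient (fun y => st0 (f y)) x r3)
  (h4 : is_gradient (fun y => st1 (f y)) x r4)
  (hgd : is_gradient (PsiOd L0 L2 psi_r) x gd)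
  (hgq : is_gradient (PsiOq L0 L2) x gq) :
  let Pd := PsiOd L0 L2 psi_r x in
  let Pq := PsiOq L0 L2 x in
  let dPd := dot4 gd (f x) in
  let dPq := dot4 gq (f x) in
  let dthetaO := (Pd * dPq - Pq * dPd) / (Pd ^ 2 + Pq ^ 2) in
  let omega := st2 x in
  ((Pd, Pq) <> (0, 0) ->
     det4 r1 r2 r3 r4 = (Pd ^ 2 + Pq ^ 2) / (Ld L0 L2 * Lq L0 L2) * (omega - dthetaO)) /\
  ((Pd, Pq) = (0, 0) -> det4 r1 r2 r3 r4 = 0) /\
  (obs_rank_condition r1 r2 r3 r4 <-> ((Pd, Pq) <> (0, 0) /\ dthetaO <> omega)).
Proof.
  destruct x as [[[a b] w] th].
  unfold Ld, Lq in hLd, hLq.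
  assert (HDp : 0 < L0^2 - L2^2) by nra.
  assert (HD : L0^2 - L2^2 <> 0) by lra.
  assert (HLD : LDelta L0 L2 = 2*L2) by (unfold LDelta, Ld, Lq; ring).
  pose proof (f_expl L0 L2 psi_r Rs va vb f HD hf) as Hf.
  assert (E10 := der_eq _ _ _ _ (h1 0%nat ltac:(lia)) ltac:(simpl; auto_derive; auto; reflexivity)).
  assert (E11 := der_eq _ _ _ _ (h1 1%nat ltac:(lia)) ltac:(simpl; auto_derive; auto; reflexivity)).
  assert (E12 := der_eq _ _ _ _ (h1 2%nat ltac:(lia)) ltac:(simpl; auto_derive; auto; reflexivity)).
  assert (E13 := der_eq _ _ _ _ (h1 3%nat ltac:(lia)) ltac:(simpl; auto_derive; auto; reflexivity)).
  assert (E20 := der_eq _ _ _ _ (h2 0%nat ltac:(lia)) ltac:(simpl; auto_derive; auto; reflexivity)).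
  assert (E21 := der_eq _ _ _ _ (h2 1%nat ltac:(lia)) ltac:(simpl; auto_derive; auto; reflexivity)).
  assert (E22 := der_eq _ _ _ _ (h2 2%nat ltac:(lia)) ltac:(simpl; auto_derive; auto; reflexivity)).
  assert (E23 := der_eq _ _ _ _ (h2 3%nat ltac:(lia)) ltac:(simpl; auto_derive; auto; reflexivity)).
  simpl in E10, E11, E12, E13, E20, E21, E22, E23.
  pose proof (h3 2%nat ltac:(lia)) as H32. pose proof (h3 3%nat ltac:(lia)) as H33.
  pose proof (h4 2%nat ltac:(lia)) as H42. pose proof (h4 3%nat ltac:(lia)) as H43.
  simpl in H32, H33, H42, H43.
  rewrite (functional_extensionality _ (fun t => FAP L0 L2 psi_r Rs va vb a b t (cos(2*th)) (sin(2*th)) (cos th) (sin th) / (L0^2-L2^2)))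
    in H32 by (intro t; apply Hf).
  rewrite (functional_extensionality _ (fun t => FBP L0 L2 psi_r Rs va vb a b t (cos(2*th)) (sin(2*th)) (cos th) (sin th) / (L0^2-L2^2)))
    in H42 by (intro t; apply Hf).
  rewrite (functional_extensionality _ (fun t => FAP L0 L2 psi_r Rs va vb a b w (cos(2*t)) (sin(2*t)) (cos t) (sin t) / (L0^2-L2^2)))
    in H33 by (intro t; apply Hf).
  rewrite (functional_extensionality _ (fun t => FBP L0 L2 psi_r Rs va vb a b w (cos(2*t)) (sin(2*t)) (cos t) (sin t) / (L0^2-L2^2)))
    in H43 by (intro t; apply Hf).
  assert (E32 := der_eq _ _ _ (FAwP L0 L2 psi_r a b (cos(2*th)) (sin(2*th)) (cos th) (sin th) / (L0^2-L2^2)) H32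
     ltac:(unfold FAP, FAwP, JaP, JbP; auto_derive; [auto | field; exact HD])).
  assert (E42 := der_eq _ _ _ (FBwP L0 L2 psi_r a b (cos(2*th)) (sin(2*th)) (cos th) (sin th) / (L0^2-L2^2)) H42
     ltac:(unfold FBP, FBwP, JaP, JbP; auto_derive; [auto | field; exact HD])).
  assert (E33 := der_eq _ _ _ (FAdP L0 L2 psi_r Rs va vb a b w (cos(2*th)) (sin(2*th)) (cos th) (sin th) / (L0^2-L2^2)) H33
     ltac:(unfold FAP, FAdP, JaP, JbP, JadP, JbdP; auto_derive; [auto | field; exact HD])).
  assert (E43 := der_eq _ _ _ (FBdP L0 L2 psi_r Rs va vb a b w (cos(2*th)) (sin(2*th)) (cos th) (sin th) / (L0^2-L2^2)) H43
     ltac:(unfold FBP, FBdP, JaP, JbP, JadP, JbdP; auto_derive; [auto | field; exact HD])).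
  assert (G0 := der_eq _ _ _ (2*L2*cos th) (hgd 0%nat ltac:(lia))
     ltac:(simpl; unfold PsiOd, i_sd; simpl; rewrite HLD; auto_derive; auto; ring)).
  assert (G1 := der_eq _ _ _ (2*L2*sin th) (hgd 1%nat ltac:(lia))
     ltac:(simpl; unfold PsiOd, i_sd; simpl; rewrite HLD; auto_derive; auto; ring)).
  assert (G2 := der_eq _ _ _ 0 (hgd 2%nat ltac:(lia))
     ltac:(simpl; unfold PsiOd, i_sd; simpl; rewrite HLD; auto_derive; auto; ring)).
  assert (G3 := der_eq _ _ _ (2*L2*(-sin th*a + cos th*b)) (hgd 3%nat ltac:(lia))
     ltac:(simpl; unfold PsiOd, i_sd; simpl; rewrite HLD; auto_derive; auto; ring)).
  assert (Q0 := der_eq _ _ _ (-2*L2*sin th) (hgq 0%nat ltac:(lia))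
     ltac:(simpl; unfold PsiOq, i_sq; simpl; rewrite HLD; auto_derive; auto; ring)).
  assert (Q1 := der_eq _ _ _ (2*L2*cos th) (hgq 1%nat ltac:(lia))
     ltac:(simpl; unfold PsiOq, i_sq; simpl; rewrite HLD; auto_derive; auto; ring)).
  assert (Q2 := der_eq _ _ _ 0 (hgq 2%nat ltac:(lia))
     ltac:(simpl; unfold PsiOq, i_sq; simpl; rewrite HLD; auto_derive; auto; ring)).
  assert (Q3 := der_eq _ _ _ (2*L2*(-cos th*a - sin th*b)) (hgq 3%nat ltac:(lia))
     ltac:(simpl; unfold PsiOq, i_sq; simpl; rewrite HLD; auto_derive; auto; ring)).
  simpl in G0, G1, G2, G3, Q0, Q1, Q2, Q3.
  destruct (hf (a,b,w,th)) as [F2 [F3 _]]. simpl in F3.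
  destruct (Hf a b w th) as [F0 F1].
  pose proof (core L0 L2 psi_r Rs va vb a b w (cos(2*th)) (sin(2*th)) (cos th) (sin th)
    ltac:(rewrite cos_2a; ring) ltac:(rewrite sin_2a; ring)
    ltac:(pose proof (sin2_cos2 th) as T; unfold Rsqr in T; lra)) as Hc.
  cbv zeta in Hc.
  intros Pd Pq dPd dPq dthetaO omega.
  assert (HPd : Pd = 2*L2*(cos th*a + sin th*b) + psi_r)
    by (subst Pd; unfold PsiOd, i_sd; simpl; rewrite HLD; ring).
  assert (HPq : Pq = 2*L2*(-sin th*a + cos th*b))
    by (subst Pq; unfold PsiOq, i_sq; simpl; rewrite HLD; ring).
  assert (Hmain : det4 r1 r2 r3 r4 = (omega*(Pd^2+Pq^2) - (Pd*dPq - Pq*dPd))/(L0^2-L2^2)).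
  { subst dPd dPq omega. unfold dot4, det4, det3.
    rewrite F0, F1, F2, F3, G0, G1, G2, G3, Q0, Q1, Q2, Q3.
    rewrite E10, E11, E12, E13, E20, E21, E22, E23.
    rewrite E32, E33, E42, E43.
    apply (Rmult_eq_reg_r ((L0^2-L2^2)^2)); [| apply pow_nonzero; exact HD].
    match goal with |- ?l = ?r =>
      transitivity (FAwP L0 L2 psi_r a b (cos (2 * th)) (sin (2 * th)) (cos th) (sin th) *
       FBdP L0 L2 psi_r Rs va vb a b w (cos (2 * th)) (sin (2 * th)) (cos th) (sin th) -
       FAdP L0 L2 psi_r Rs va vb a b w (cos (2 * th)) (sin (2 * th)) (cos th) (sin th) *
       FBwP L0 L2 psi_r a b (cos (2 * th)) (sin (2 * th)) (cos th) (sin th)) end.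
    - field. exact HD.
    - rewrite Hc, HPd, HPq. change (st2 (a,b,w,th)) with w. field. exact HD. }
  assert (HLL : Ld L0 L2 * Lq L0 L2 = L0^2 - L2^2) by (unfold Ld, Lq; ring).
  assert (Hpos : (Pd, Pq) <> (0,0) -> Pd^2 + Pq^2 <> 0).
  { intros Hne Hz. apply Hne. assert (Pd = 0) by nra. assert (Pq = 0) by nra. subst; congruence. }
  split; [|split].
  - intros Hne. rewrite Hmain, HLL. subst dthetaO. pose proof (Hpos Hne). field; split; assumption.
  - intros Heq. injection Heq as -> ->. rewrite Hmain. field. exact HD.
  - unfold obs_rank_condition. rewrite Hmain. split.
    + intros Hdet. split.
      * intro Heq. injection Heq as E1 E2. apply Hdet. rewrite E1, E2. field. exact HD.
      * intro Heq. apply Hdet. subst dthetaO.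
        assert (Hn : Pd^2+Pq^2 <> 0).
        { intro Hz. assert (Pd = 0) by nra. assert (Pq = 0) by nra.
          apply Hdet. rewrite H, H0. field. exact HD. }
        rewrite <- Heq. field; split; assumption.
    + intros [Hne Hth] Hz. apply Hth. subst dthetaO.
      pose proof (Hpos Hne) as Hn.
      assert (Hz' : omega*(Pd^2+Pq^2) - (Pd*dPq - Pq*dPd) = 0).
      { apply (Rmult_eq_reg_r (/(L0^2-L2^2))); [|apply Rinv_neq_0_compat; exact HD].
        rewrite Rmult_0_l. exact Hz. }
      apply (Rmult_eq_reg_r (Pd^2+Pq^2)); [|exact Hn].
      field_simplify; [|exact Hn]. lra.
Qed.
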